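(* Let $\alpha\ge0$ and $0\le\beta<1$. Let $f=h+\overline{g}\in\mathcal{W}_{\mathcal{H}}^0(\alpha,\beta)$ and let $\phi$ be analytic in $\mathbb{D}$ with $\phi(0)=0$, $\phi'(0)=1$ and $\Re\dfrac{\phi(z)}{z}>\dfrac12$ for all $z\in\mathbb{D}$. Then $f\,\widehat{*}\,\phi:=h*\phi+\overline{g*\phi}\in\mathcal{W}_{\mathcal{H}}^0(\alpha,\beta)$.
   Context: Let $\mathbb{D}=\{z\in\mathbb{C}:|z|<1\}$. $\mathcal{H}^0$ denotes the class of harmonic maps $f=h+\overline{g}$ on $\mathbb{D}$, with $h,g$ analytic in $\mathbb{D}$, $h(z)=z+\sum_{n\ge2}a_nz^n$ and $g(z)=\sum_{n\ge2}b_nz^n$. For $\alpha\ge0$, $0\le\beta<1$, $\mathcal{W}_{\mathcal{H}}^0(\alpha,\beta)$ denotes the class of $f=h+\overline{g}\in\mathcal{H}^0$ such that $\Re\big(h'(z)+\alpha zh''(z)-\beta\big)>|g'(z)+\alpha zg''(z)|$ for all $z\in\mathbb{D}$. For analytic $\psi_1(z)=\sum c_nz^n$, $\psi_2(z)=\sum d_nz^n$, the Hadamard product is $(\psi_1*\psi_2)(z)=\sum c_nd_nz^n$. *)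

(* Defs.v *)
From Stdlib Require Import Reals Lra ClassicalEpsilon.
Open Scope R_scope.

Record Cplx : Type := mkC { Re : R; Im : R }.

Definition C0 : Cplx := mkC 0 0.
Definition RtoC (x : R) : Cplx := mkC x 0.
Definition Cadd (z w : Cplx) : Cplx := mkC (Re z + Re w) (Im z + Im w).
Definition Copp (z : Cplx) : Cplx := mkC (- Re z) (- Im z).
Definition Csub (z w : Cplx) : Cplx := Cadd z (Copp w).
Definition Cmul (z w : Cplx) : Cplx :=
  mkC (Re z * Re w - Im z * Im w) (Re z * Im w + Im z * Re w).
Definition Cnorm (z : Cplx) : R := sqrt (Re z * Re z + Im z * Im z).
Definition Cinv (z : Cplx) : Cplx :=
  let d := Re z * Re z + Im z * Im z in mkC (Re z / d) (- Im z / d).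
Definition Cdiv (z w : Cplx) : Cplx := Cmul z (Cinv w).
Fixpoint Cpow (z : Cplx) (n : nat) : Cplx :=
  match n with O => RtoC 1 | S m => Cmul z (Cpow z m) end.

Definition Cseries_cv (u : nat -> Cplx) (l : Cplx) : Prop :=
  Un_cv (fun N => sum_f_R0 (fun k => Re (u k)) N) (Re l) /\
  Un_cv (fun N => sum_f_R0 (fun k => Im (u k)) N) (Im l).

Definition Csum (u : nat -> Cplx) : Cplx :=
  epsilon (inhabits C0) (fun l => Cseries_cv u l).

(* Analytic functions on the unit disk are represented by their Taylor
   coefficient sequences a : nat -> Cplx (a n = coefficient of z^n). *)
Definition analytic_D (a : nat -> Cplx) : Prop :=
  forall z : Cplx, Cnorm z < 1 -> exists l, Cseries_cv (fun n => Cmul (a n) (Cpow z n)) l.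

Definition ps (a : nat -> Cplx) (z : Cplx) : Cplx := Csum (fun n => Cmul (a n) (Cpow z n)).

Definition dcoef (a : nat -> Cplx) : nat -> Cplx :=
  fun n => Cmul (RtoC (INR (S n))) (a (S n)).

Definition hadamard (a b : nat -> Cplx) : nat -> Cplx := fun n => Cmul (a n) (b n).

(* f = h + conj g in H^0 : h(z) = z + sum_{n>=2} a_n z^n, g(z) = sum_{n>=2} b_n z^n,
   both analytic in D. *)
Definition in_H0 (a b : nat -> Cplx) : Prop :=
  analytic_D a /\ analytic_D b /\
  a 0%nat = C0 /\ a 1%nat = RtoC 1 /\ b 0%nat = C0 /\ b 1%nat = C0.

Definition in_WH0 (alpha beta : R) (a b : nat -> Cplx) : Prop :=
  in_H0 a b /\
  forall z : Cplx, Cnorm z < 1 ->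
    Re (Csub (Cadd (ps (dcoef a) z)
                   (Cmul (RtoC alpha) (Cmul z (ps (dcoef (dcoef a)) z))))
             (RtoC beta))
    > Cnorm (Cadd (ps (dcoef b) z)
                  (Cmul (RtoC alpha) (Cmul z (ps (dcoef (dcoef b)) z)))).

(* Main.v *)
Require Import Defs.
From Stdlib Require Import Reals.
Open Scope R_scope.
From Stdlib Require Import Lra Psatz ClassicalEpsilon FunctionalExtensionality Classical.

Lemma Cext : forall z w, Re z = Re w -> Im z = Im w -> z = w.
Proof. intros [a b] [c d]; simpl; intros -> ->; reflexivity. Qed.

Ltac Cs := unfold Csub, Cadd, Copp, Cmul, RtoC, C0 in *; simpl in *.
Ltac Cring := apply Cext; Cs; ring.

Lemma Cnorm_ge0 z : 0 <= Cnorm z.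
Proof. apply sqrt_pos. Qed.

Lemma Cnorm_sq z : Cnorm z * Cnorm z = Re z * Re z + Im z * Im z.
Proof. unfold Cnorm; apply sqrt_sqrt; nra. Qed.

Lemma sq_le_le u v : 0 <= v -> u * u <= v * v -> u <= v.
Proof. intros; nra. Qed.

Lemma abs_sq x : Rabs x * Rabs x = x * x.
Proof. rewrite <- Rabs_mult. apply Rabs_right. nra. Qed.

Lemma Re_le z : Rabs (Re z) <= Cnorm z.
Proof. apply sq_le_le. apply Cnorm_ge0. rewrite Cnorm_sq, abs_sq. nra. Qed.

Lemma Im_le z : Rabs (Im z) <= Cnorm z.
Proof. apply sq_le_le. apply Cnorm_ge0. rewrite Cnorm_sq, abs_sq. nra. Qed.

Lemma Cnorm_le_sum z : Cnorm z <= Rabs (Re z) + Rabs (Im z).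
Proof. pose proof (Rabs_pos (Re z)); pose proof (Rabs_pos (Im z)).
 apply sq_le_le. lra.
 rewrite Cnorm_sq. pose proof (abs_sq (Re z)); pose proof (abs_sq (Im z)). nra. Qed.

Lemma CS a b x y : a * x + b * y <= Cnorm (mkC a b) * Cnorm (mkC x y).
Proof.
 pose proof (Cnorm_sq (mkC a b)); pose proof (Cnorm_sq (mkC x y)); simpl in *.
 pose proof (Cnorm_ge0 (mkC a b)); pose proof (Cnorm_ge0 (mkC x y)).
 apply sq_le_le. apply Rmult_le_pos; assumption.
 replace (Cnorm {| Re := a; Im := b |} * Cnorm {| Re := x; Im := y |} *
  (Cnorm {| Re := a; Im := b |} * Cnorm {| Re := x; Im := y |})) with
  ((Cnorm {| Re := a; Im := b |} * Cnorm {| Re := a; Im := b |}) * (Cnorm {| Re := x; Im := y |} * Cnorm {| Re := x; Im := y |})) by ring.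
 rewrite H, H0. pose proof (Rle_0_sqr (a*y-b*x)); unfold Rsqr in *; lra. Qed.

Lemma Cnorm_mul z w : Cnorm (Cmul z w) = Cnorm z * Cnorm w.
Proof. unfold Cnorm. rewrite <- sqrt_mult_alt by nra. f_equal. Cs. ring. Qed.

Lemma Cnorm_RtoC x : Cnorm (RtoC x) = Rabs x.
Proof. unfold Cnorm, RtoC; simpl. replace (x*x+0*0) with (Rsqr x) by (unfold Rsqr; ring).
 apply sqrt_Rsqr_abs. Qed.

Lemma Cnorm_pow z n : Cnorm (Cpow z n) = Cnorm z ^ n.
Proof. induction n; simpl. rewrite Cnorm_RtoC; apply Rabs_R1.
 rewrite Cnorm_mul, IHn; ring. Qed.

Lemma Cnorm_add z w : Cnorm (Cadd z w) <= Cnorm z + Cnorm w.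
Proof. apply sq_le_le. pose proof (Cnorm_ge0 z); pose proof (Cnorm_ge0 w); lra.
 rewrite Cnorm_sq. pose proof (CS (Re z) (Im z) (Re w) (Im w)).
 destruct z as [a b], w as [c d]; simpl in *.
 pose proof (Cnorm_sq (mkC a b)); pose proof (Cnorm_sq (mkC c d)); simpl in *. nra. Qed.

Lemma Cnorm_C0 : Cnorm C0 = 0.
Proof. unfold Cnorm, C0; simpl. replace (0*0+0*0) with 0 by ring. apply sqrt_0. Qed.

Lemma Cnorm_opp z : Cnorm (Copp z) = Cnorm z.
Proof. unfold Cnorm, Copp; simpl. f_equal; ring. Qed.

Lemma Cpow_mul z w n : Cpow (Cmul z w) n = Cmul (Cpow z n) (Cpow w n).
Proof. induction n; simpl. Cring. rewrite IHn. Cring. Qed.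

Lemma Cpow_RtoC x n : Cpow (RtoC x) n = RtoC (x ^ n).
Proof. induction n; simpl. reflexivity. rewrite IHn. Cring. Qed.


Lemma CV_const c : Un_cv (fun _ => c) c.
Proof. intros e He; exists 0%nat; intros; unfold R_dist; rewrite Rminus_diag, Rabs_R0; lra. Qed.

Lemma lim_le (s : nat -> R) l b B K : Un_cv s l ->
  (forall N, (N >= K)%nat -> Rabs (s N - b) <= B) -> Rabs (l - b) <= B.
Proof.
 intros Hs HB. destruct (Rle_or_lt (Rabs (l - b)) B) as [h|h]; auto.
 destruct (Hs (Rabs (l - b) - B)) as [N0 HN0]; [lra|].
 specialize (HN0 (Nat.max N0 K) (Nat.le_max_l _ _)). specialize (HB (Nat.max N0 K) (Nat.le_max_r _ _)).
 unfold R_dist in HN0. pose proof (Rabs_triang (l - s (Nat.max N0 K)) (s (Nat.max N0 K) - b)).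
 replace (l - s (Nat.max N0 K) + (s (Nat.max N0 K) - b)) with (l-b) in H by ring.
 rewrite <- Rabs_Ropp in HN0. replace (- (s (Nat.max N0 K) - l)) with (l - s (Nat.max N0 K)) in HN0 by ring. lra.
Qed.

Lemma geom_cv r : 0 <= r < 1 -> Un_cv (fun N => sum_f_R0 (fun n => r ^ n) N) (/ (1 - r)).
Proof. intros Hr. pose proof (GP_infinite r) as H. assert (Rabs r < 1) by (rewrite Rabs_right; lra).
 specialize (H H0). intros e He; destruct (H e He) as [N HN]; exists N; intros n Hn.
 specialize (HN n Hn). unfold R_dist in *. erewrite sum_eq; [exact HN|]. intros; simpl; ring. Qed.

Lemma partial_bound (x : nat -> R) C r : 0 <= r < 1 -> (forall n, Rabs (x n) <= C * r ^ n) ->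
  forall K, Rabs (sum_f_R0 x K) <= C * (1 - r ^ S K) / (1 - r).
Proof. intros Hr Hx K. induction K; simpl.
 - specialize (Hx 0%nat); simpl in Hx. replace (C * (1 - r * 1) / (1 - r)) with (C * 1) by (field; lra). lra.
 - eapply Rle_trans. apply Rabs_triang. specialize (Hx (S K)).
   replace (C * (1 - r * (r * r ^ K)) / (1 - r)) with (C * (1 - r * r ^ K) / (1 - r) + C * (r * r^K)) by (field; lra).
   simpl in Hx, IHK. lra. Qed.

Lemma diff_bound (x : nat -> R) C r K : 0 <= r < 1 -> (forall n, Rabs (x n) <= C * r ^ n) ->
  forall j, Rabs (sum_f_R0 x (K + j) - sum_f_R0 x K) <= C * r ^ S K * (1 - r ^ j) / (1 - r).
Proof. intros Hr Hx j. induction j.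
 - rewrite Nat.add_0_r, Rminus_diag, Rabs_R0. simpl. replace (C * (r * r ^ K) * (1 - 1) / (1 - r)) with 0 by (field; lra). lra.
 - rewrite Nat.add_succ_r, tech5. specialize (Hx (S (K + j))).
   replace (sum_f_R0 x (K + j) + x (S (K + j)) - sum_f_R0 x K) with ((sum_f_R0 x (K + j) - sum_f_R0 x K) + x (S (K + j))) by ring.
   eapply Rle_trans. apply Rabs_triang.
   replace (C * r ^ S K * (1 - r ^ S j) / (1 - r)) with (C * r ^ S K * (1 - r ^ j) / (1 - r) + C * r ^ (S (K + j))) .
   lra. rewrite <- Nat.add_succ_l, pow_add. simpl. field. lra. Qed.

Lemma sum_scal_l (f : nat -> R) c N : sum_f_R0 (fun i => c * f i) N = c * sum_f_R0 f N.
Proof. rewrite scal_sum. apply sum_eq; intros; ring. Qed.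

Lemma real_geom (x : nat -> R) C r : 0 <= r < 1 -> (forall n, Rabs (x n) <= C * r ^ n) ->
  exists l, Un_cv (fun N => sum_f_R0 x N) l /\
   (forall K, Rabs (l - sum_f_R0 x K) <= C * r ^ S K / (1 - r)) /\
   (forall K, Rabs (sum_f_R0 x K) <= C / (1 - r)).
Proof.
 intros Hr Hx. assert (HC : 0 <= C). { specialize (Hx 0%nat). simpl in Hx. pose proof (Rabs_pos (x 0%nat)). lra. }
 assert (Hp : forall n, 0 <= r ^ n) by (intros; apply pow_le; lra).
 assert (Hex : {l | Un_cv (fun N => sum_f_R0 (fun n => x n + C * r ^ n) N) l}).
 { apply Rseries_CV_comp with (Bn := fun n => 2 * C * r ^ n).
   - intros n; specialize (Hx n). pose proof (Rle_abs (x n)); pose proof (Rle_abs (- x n)). rewrite Rabs_Ropp in *. lra.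
   - exists (2 * C * / (1 - r)). intros e He.
     assert (H2 := CV_mult _ _ _ _ (CV_const (2 * C)) (geom_cv r Hr)). destruct (H2 e He) as [N HN]; exists N; intros n Hn.
     specialize (HN n Hn). rewrite scal_sum in HN. erewrite sum_eq; [exact HN|]. intros; simpl; ring. }
 destruct Hex as [l1 Hl1].
 pose proof (CV_minus _ _ _ _ Hl1 (CV_mult _ _ _ _ (CV_const C) (geom_cv r Hr))) as Hl.
 exists (l1 - C * / (1 - r)). assert (Hcv : Un_cv (fun N => sum_f_R0 x N) (l1 - C * / (1 - r))).
 { intros e He; destruct (Hl e He) as [N HN]; exists N; intros n Hn; specialize (HN n Hn).
   rewrite sum_plus, sum_scal_l in HN. unfold R_dist in *.
   set (G := sum_f_R0 (fun n0 : nat => r ^ n0) n) in HN. change (sum_f_R0 (pow r) n) with G in HN. replace (sum_f_R0 x n + C * G - C * G) with (sum_f_R0 x n) in HN by ring. exact HN. }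
 split; [exact Hcv|split].
 - intros K. apply (lim_le _ _ _ _ K Hcv). intros N HN. replace N with (K + (N - K))%nat by lia.
   eapply Rle_trans. apply diff_bound; eauto. pose proof (Hp (N-K)%nat).
   apply Rmult_le_compat_r. left; apply Rinv_0_lt_compat; lra.
   assert (0 <= C * r ^ S K) by (apply Rmult_le_pos; auto). nra.
 - intros K. eapply Rle_trans. apply partial_bound; eauto. unfold Rdiv. apply Rmult_le_compat_r.
   left; apply Rinv_0_lt_compat; lra. pose proof (Hp (S K)). nra.
Qed.


Lemma Csum_unique u l : Cseries_cv u l -> Csum u = l.
Proof. intros H. unfold Csum. destruct (epsilon_spec (inhabits C0) (fun l => Cseries_cv u l) (ex_intro _ l H)) as [H1 H2].
 destruct H as [H3 H4]. apply Cext; eapply UL_sequence; eauto. Qed.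

Lemma cv_geomC (u : nat -> Cplx) C r : 0 <= r < 1 -> (forall n, Cnorm (u n) <= C * r ^ n) ->
  Cseries_cv u (Csum u) /\
  (forall K, Rabs (Re (Csum u) - sum_f_R0 (fun n => Re (u n)) K) <= C * r ^ S K / (1 - r)) /\
  (forall K, Rabs (sum_f_R0 (fun n => Re (u n)) K) <= C / (1 - r)).
Proof. intros Hr Hu.
 destruct (real_geom (fun n => Re (u n)) C r Hr) as [l1 [H1 [H2 H3]]].
 { intros n; eapply Rle_trans; [apply Re_le|apply Hu]. }
 destruct (real_geom (fun n => Im (u n)) C r Hr) as [l2 [H4 [H5 H6]]].
 { intros n; eapply Rle_trans; [apply Im_le|apply Hu]. }
 assert (Hc : Cseries_cv u (mkC l1 l2)) by (split; assumption).
 rewrite (Csum_unique _ _ Hc). simpl. auto. Qed.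

Lemma sum_minus_ (f g : nat -> R) N : sum_f_R0 (fun i => f i - g i) N = sum_f_R0 f N - sum_f_R0 g N.
Proof. induction N; simpl; [ring| rewrite IHN; ring]. Qed.

Lemma Cseries_cv_ext u v l : (forall n, u n = v n) -> Cseries_cv u l -> Cseries_cv v l.
Proof. intros H; replace v with u by (apply functional_extensionality; auto); auto. Qed.

Lemma Cseries_cv_add u v l1 l2 : Cseries_cv u l1 -> Cseries_cv v l2 ->
  Cseries_cv (fun n => Cadd (u n) (v n)) (Cadd l1 l2).
Proof. intros [H1 H2] [H3 H4]. split; simpl.
 - eapply Un_cv_ext; [|apply (CV_plus _ _ _ _ H1 H3)]. intros; simpl; rewrite sum_plus; reflexivity.
 - eapply Un_cv_ext; [|apply (CV_plus _ _ _ _ H2 H4)]. intros; simpl; rewrite sum_plus; reflexivity.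
Qed.

Lemma Cseries_cv_scal c u l : Cseries_cv u l -> Cseries_cv (fun n => Cmul c (u n)) (Cmul c l).
Proof. intros [H1 H2]. split; simpl.
 - eapply Un_cv_ext; [|apply (CV_minus _ _ _ _ (CV_mult _ _ _ _ (CV_const (Re c)) H1) (CV_mult _ _ _ _ (CV_const (Im c)) H2))].
   intros; simpl. rewrite sum_minus_, !sum_scal_l. reflexivity.
 - eapply Un_cv_ext; [|apply (CV_plus _ _ _ _ (CV_mult _ _ _ _ (CV_const (Re c)) H2) (CV_mult _ _ _ _ (CV_const (Im c)) H1))].
   intros; simpl. rewrite sum_plus, !sum_scal_l. reflexivity.
Qed.

Definition shiftC (u : nat -> Cplx) : nat -> Cplx := fun n => match n with O => C0 | S k => u k end.

Lemma Cseries_cv_shift u l : Cseries_cv u l -> Cseries_cv (shiftC u) l.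
Proof. intros [H1 H2]. split; intros e He.
 - destruct (H1 e He) as [N HN]; exists (S N); intros n Hn. destruct n as [|n]; [lia|].
   rewrite decomp_sum by lia. simpl. replace (pred (S n)) with n by reflexivity. rewrite Rplus_0_l. apply HN; lia.
 - destruct (H2 e He) as [N HN]; exists (S N); intros n Hn. destruct n as [|n]; [lia|].
   rewrite decomp_sum by lia. simpl. rewrite Rplus_0_l. apply HN; lia.
Qed.

Definition single (c : Cplx) : nat -> Cplx := fun n => match n with O => c | S _ => C0 end.

Lemma sum_single_zero N : sum_f_R0 (fun _ => 0) N = 0.
Proof. induction N; simpl; [|rewrite IHN]; ring. Qed.

Lemma Cseries_cv_single c : Cseries_cv (single c) c.
Proof. split; intros e He; exists 0%nat; intros n Hn; unfold R_dist;
 (destruct n; [simpl|rewrite decomp_sum by lia; simpl; erewrite sum_eq; [rewrite sum_single_zero|intros; reflexivity]]);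
 match goal with |- Rabs ?x < e => replace x with 0 by (simpl; ring) end; rewrite Rabs_R0; lra. Qed.


Definition bnd (a : nat -> Cplx) (r : R) := exists C, forall n, Cnorm (a n) * r ^ n <= C.
Definition bndall a := forall r, 0 <= r < 1 -> bnd a r.

Lemma term_bound (x : nat -> R) l : Un_cv (fun N => sum_f_R0 x N) l -> exists M, forall n, Rabs (x n) <= M.
Proof. intros H. destruct (maj_by_pos _ (exist _ l H)) as [M [HM1 HM2]]. exists (2 * M). intros [|n].
 - specialize (HM2 0%nat); simpl in HM2; lra.
 - replace (x (S n)) with (sum_f_R0 x (S n) - sum_f_R0 x n) by (simpl; ring).
   eapply Rle_trans; [apply Rabs_triang|]. rewrite Rabs_Ropp. pose proof (HM2 (S n)); pose proof (HM2 n); lra. Qed.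

Lemma analytic_bndall a : analytic_D a -> bndall a.
Proof. intros Ha r Hr. destruct (Ha (RtoC r)) as [l [H1 H2]].
 { rewrite Cnorm_RtoC, Rabs_right; lra. }
 destruct (term_bound _ _ H1) as [M1 HM1]. destruct (term_bound _ _ H2) as [M2 HM2].
 exists (M1 + M2). intros n. specialize (HM1 n); specialize (HM2 n). simpl in *. rewrite Cpow_RtoC in *.
 simpl in *. pose proof (Cnorm_le_sum (a n)). assert (0 <= r ^ n) by (apply pow_le; lra).
 rewrite Rmult_0_r, Rminus_0_r in HM1. rewrite Rmult_0_r, Rplus_0_l in HM2.
 rewrite Rabs_mult, (Rabs_right (r^n)) in HM1, HM2 by lra. nra. Qed.

Lemma geo_bound x s : bndall x -> 0 <= s < 1 -> exists C r, 0 <= r < 1 /\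
  forall w n, Cnorm w <= s -> Cnorm (Cmul (x n) (Cpow w n)) <= C * r ^ n.
Proof. intros Hx Hs. set (t := (1 + s) / 2). destruct (Hx t) as [C HC]. unfold t; lra.
 exists C, (s / t). split. split. unfold t; apply Rmult_le_pos; [lra|left; apply Rinv_0_lt_compat; lra].
 unfold t; apply Rmult_lt_reg_r with ((1+s)/2); [lra|]. unfold Rdiv; field_simplify; lra.
 intros w n Hw. rewrite Cnorm_mul, Cnorm_pow.
 replace s with (t * (s / t)) in Hw by (unfold t; field; lra).
 assert (0 <= s / t) by (unfold t; apply Rmult_le_pos; [lra|left; apply Rinv_0_lt_compat; lra]).
 assert (Cnorm w ^ n <= t ^ n * (s/t) ^ n). { rewrite <- Rpow_mult_distr. apply pow_incr. split; [apply Cnorm_ge0|auto]. }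
 specialize (HC n). pose proof (Cnorm_ge0 (x n)). pose proof (pow_le (s/t) n H).
 eapply Rle_trans. apply Rmult_le_compat_l; [auto|exact H0]. nra. Qed.

Lemma ps_cv x w : bndall x -> Cnorm w < 1 -> Cseries_cv (fun n => Cmul (x n) (Cpow w n)) (ps x w).
Proof. intros Hx Hw. destruct (geo_bound x (Cnorm w) Hx) as [C [r [Hr HC]]]. split; [apply Cnorm_ge0|auto].
 apply (cv_geomC _ C r Hr). intros; apply HC; lra. Qed.

Lemma bndall_analytic a : bndall a -> analytic_D a.
Proof. intros Ha z Hz. exists (ps a z). apply ps_cv; auto. Qed.

Lemma L0 x : 0 <= x < 1 -> exists K, forall k, INR (S k) * x ^ k <= K.
Proof. intros Hx. destruct (Req_dec x 0) as [->|Hx0].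
 - exists 1. intros [|k]; simpl; lra.
 - set (d := / x - 1). assert (Hd : 0 < d). { unfold d. assert (1 < / x). { rewrite <- Rinv_1. apply Rinv_lt_contravar; lra. } lra. }
   exists (1 + / d). intros k.
   assert (Hb : forall k, x ^ k * (1 + INR k * d) <= 1).
   { induction k0. simpl; lra. rewrite S_INR. simpl.
     assert (x * (1 + d) = 1) by (unfold d; field; lra).
     assert (0 <= x ^ k0) by (apply pow_le; lra). assert (0 <= INR k0) by apply pos_INR.
     replace (x * x ^ k0 * (1 + (INR k0 + 1) * d)) with (x ^ k0 * (x * (1 + d)) + x * (x ^ k0 * INR k0 * d)) by ring.
     rewrite H. assert (0 <= x ^ k0 * INR k0 * d) by (apply Rmult_le_pos; [apply Rmult_le_pos|]; lra).
     assert (x * (x ^ k0 * INR k0 * d) <= x ^ k0 * INR k0 * d) by (rewrite <- (Rmult_1_l (x ^ k0 * INR k0 * d)) at 2; apply Rmult_le_compat_r; lra). lra. }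
   specialize (Hb k). rewrite S_INR. assert (0 <= x ^ k) by (apply pow_le; lra). assert (0 <= INR k) by apply pos_INR.
   assert ((INR k + 1) <= (1 + / d) * (1 + INR k * d)). { replace ((1 + / d) * (1 + INR k * d)) with (1 + INR k * d + / d + INR k) by (field; lra).
     assert (0 < / d) by (apply Rinv_0_lt_compat; lra). nra. }
   assert (0 < / d) by (apply Rinv_0_lt_compat; lra). nra. Qed.

Lemma bnd_helper a r : bndall a -> 0 <= r < 1 -> exists C, forall k, Cnorm (a (S k)) * r ^ k * INR (S k) <= C.
Proof. intros Ha Hr. set (t := (1 + r) / 2). destruct (Ha t) as [C HC]. unfold t; lra.
 assert (Ht : 0 < t) by (unfold t; lra). set (x := r / t).
 assert (Hx : 0 <= x < 1). { unfold x, t; split. apply Rmult_le_pos; [lra|left; apply Rinv_0_lt_compat; lra].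
   apply Rmult_lt_reg_r with ((1+r)/2); [lra|]. unfold Rdiv; field_simplify; lra. }
 destruct (L0 x Hx) as [K HK]. exists (C * K / t). intros k. specialize (HC (S k)). specialize (HK k).
 assert (Er : r ^ k = t ^ k * x ^ k) by (rewrite <- Rpow_mult_distr; f_equal; unfold x; field; lra).
 rewrite Er. simpl in HC. pose proof (Cnorm_ge0 (a (S k))). assert (0 <= t ^ k) by (apply pow_le; lra).
 assert (0 <= x ^ k) by (apply pow_le; lra). assert (0 <= INR (S k)) by apply pos_INR.
 assert (0 <= Cnorm (a (S k)) * (t * t ^ k)) by (apply Rmult_le_pos; auto; apply Rmult_le_pos; lra).
 apply Rmult_le_reg_l with t; [lra|]. replace (t * (C * K / t)) with (C * K) by (field; lra).
 replace (t * (Cnorm (a (S k)) * (t ^ k * x ^ k) * INR (S k))) with ((Cnorm (a (S k)) * (t * t ^ k)) * (INR (S k) * x ^ k)) by ring.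
 assert (0 <= INR (S k) * x ^ k) by (apply Rmult_le_pos; auto).
 apply Rle_trans with (C * (INR (S k) * x ^ k)). apply Rmult_le_compat_r; auto.
 apply Rmult_le_compat_l; auto. lra. Qed.

Lemma bndall_add u v : bndall u -> bndall v -> bndall (fun n => Cadd (u n) (v n)).
Proof. intros Hu Hv r Hr. destruct (Hu r Hr) as [C1 H1]; destruct (Hv r Hr) as [C2 H2]. exists (C1 + C2).
 intros n. specialize (H1 n); specialize (H2 n). pose proof (Cnorm_add (u n) (v n)).
 assert (0 <= r ^ n) by (apply pow_le; lra). nra. Qed.

Lemma bndall_scal c u : bndall u -> bndall (fun n => Cmul c (u n)).
Proof. intros Hu r Hr. destruct (Hu r Hr) as [C1 H1]. exists (Cnorm c * C1). intros n. rewrite Cnorm_mul.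
 rewrite Rmult_assoc. apply Rmult_le_compat_l; [apply Cnorm_ge0|auto]. Qed.

Lemma bndall_shift u : bndall u -> bndall (shiftC u).
Proof. intros Hu r Hr. destruct (Hu r Hr) as [C1 H1]. exists (Rmax 0 C1). intros [|n]; simpl.
 - rewrite Cnorm_C0. unfold Rmax; destruct Rle_dec; lra.
 - specialize (H1 n). pose proof (Cnorm_ge0 (u n)). assert (0 <= r ^ n) by (apply pow_le; lra).
   assert (Cnorm (u n) * (r * r ^ n) <= Cnorm (u n) * r ^ n) by (apply Rmult_le_compat_l; [auto|]; rewrite <- (Rmult_1_l (r ^ n)) at 2; apply Rmult_le_compat_r; lra).
   pose proof (Rmax_r 0 C1). lra. Qed.

Lemma bndall_dcoef a : bndall a -> bndall (dcoef a).
Proof. intros Ha r Hr. destruct (bnd_helper a r Ha Hr) as [C HC]. exists C. intros n. unfold dcoef.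
 rewrite Cnorm_mul, Cnorm_RtoC, Rabs_right by (apply Rle_ge, pos_INR). specialize (HC n). lra. Qed.

Lemma bndall_unshift a : bndall a -> bndall (fun k => a (S k)).
Proof. intros Ha r Hr. destruct (bnd_helper a r Ha Hr) as [C HC]. exists C. intros n. specialize (HC n).
 assert (1 <= INR (S n)) by (rewrite S_INR; pose proof (pos_INR n); lra).
 assert (0 <= Cnorm (a (S n)) * r ^ n) by (apply Rmult_le_pos; [apply Cnorm_ge0|apply pow_le; lra]). nra. Qed.

Definition hadamard' := hadamard.

Lemma bndall_had u v : bndall u -> bndall v -> bndall (hadamard u v).
Proof. intros Hu Hv r Hr. set (t := (1 + r) / 2). destruct (Hu t) as [C1 H1]. unfold t; lra.
 destruct (Hv t) as [C2 H2]. unfold t; lra. exists (C1 * C2). intros n. unfold hadamard. rewrite Cnorm_mul.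
 specialize (H1 n); specialize (H2 n). assert (r ^ n <= t ^ n * t ^ n).
 { rewrite <- Rpow_mult_distr. apply pow_incr. unfold t; nra. }
 pose proof (Cnorm_ge0 (u n)); pose proof (Cnorm_ge0 (v n)). assert (0 <= t ^ n) by (apply pow_le; unfold t; lra).
 apply Rle_trans with ((Cnorm (u n) * t ^ n) * (Cnorm (v n) * t ^ n)).
 replace ((Cnorm (u n) * t ^ n) * (Cnorm (v n) * t ^ n)) with ((Cnorm (u n) * Cnorm (v n)) * (t ^ n * t ^ n)) by ring.
 apply Rmult_le_compat_l; [apply Rmult_le_pos|]; auto.
 apply Rmult_le_compat; auto; apply Rmult_le_pos; auto. Qed.

Lemma bndall_single c : bndall (single c).
Proof. intros r Hr. exists (Cnorm c). intros [|n]; simpl. lra. rewrite Cnorm_C0. pose proof (Cnorm_ge0 c). lra. Qed.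


Lemma telesc (g : nat -> R) n : sum_f_R0 (fun l => g (S l) - g l) n = g (S n) - g 0%nat.
Proof. induction n; simpl; [ring|rewrite IHn; ring]. Qed.

Definition th (N : nat) (l : nat) := 2 * PI * INR l / INR N.

Lemma INRN_pos (N : nat) (HN : (0 < N)%nat) : 0 < INR N.
Proof. apply lt_0_INR; auto. Qed.

Lemma sumC0 (N : nat) (HN : (0 < N)%nat) k : (0 < k < N)%nat -> sum_f_R0 (fun l => cos (INR k * th N l)) (N - 1) = 0.
Proof. intros Hk. set (phi := 2 * PI * INR k / INR N).
 assert (Hp : 0 < phi / 2 < PI). { unfold phi. pose proof PI_RGT_0. pose proof (INRN_pos N HN).
   assert (INR k < INR N) by (apply lt_INR; lia). assert (0 < INR k) by (apply lt_0_INR; lia).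
   split. apply Rmult_lt_0_compat; [|lra]. unfold Rdiv. apply Rmult_lt_0_compat; [nra|apply Rinv_0_lt_compat; lra].
   apply Rmult_lt_reg_r with (2 * INR N); [lra|]. field_simplify; [|lra]. unfold Rdiv. nra. }
 pose proof (sin_gt_0 _ (proj1 Hp) (proj2 Hp)) as Hs.
 set (g := fun l : nat => sin ((INR l - 1/2) * phi)).
 assert (E : forall l, cos (INR k * th N l) * (2 * sin (phi / 2)) = g (S l) - g l).
 { intros l. unfold g. rewrite S_INR. replace ((INR l + 1 - 1/2) * phi) with (INR l * phi + phi / 2) by field.
   replace ((INR l - 1/2) * phi) with (INR l * phi - phi / 2) by field. rewrite sin_plus, sin_minus.
   replace (INR k * th N l) with (INR l * phi) by (unfold th, phi; field; pose proof (INRN_pos N HN); lra). ring. }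
 assert (T : sum_f_R0 (fun l => cos (INR k * th N l)) (N - 1) * (2 * sin (phi / 2)) = 0).
 { rewrite Rmult_comm, scal_sum. erewrite sum_eq; [|intros; apply E]. rewrite telesc.
   replace (S (N - 1)) with N by lia. unfold g. simpl INR.
   replace ((INR N - 1/2) * phi) with ((0 - 1/2) * phi + 2 * INR k * PI) by (unfold phi; field; pose proof (INRN_pos N HN); lra).
   rewrite sin_period. ring. }
 apply Rmult_integral in T. destruct T; auto. lra. Qed.

Lemma sumS0 (N : nat) (HN : (0 < N)%nat) k : (k < N)%nat -> sum_f_R0 (fun l => sin (INR k * th N l)) (N - 1) = 0.
Proof. intros Hk. destruct k as [|k]. { simpl. erewrite sum_eq; [apply sum_single_zero|]. intros; rewrite Rmult_0_l, sin_0; auto. }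
 set (phi := 2 * PI * INR (S k) / INR N).
 assert (Hp : 0 < phi / 2 < PI). { unfold phi. pose proof PI_RGT_0. pose proof (INRN_pos N HN).
   assert (INR (S k) < INR N) by (apply lt_INR; lia). assert (0 < INR (S k)) by (apply lt_0_INR; lia).
   split. apply Rmult_lt_0_compat; [|lra]. unfold Rdiv. apply Rmult_lt_0_compat; [nra|apply Rinv_0_lt_compat; lra].
   apply Rmult_lt_reg_r with (2 * INR N); [lra|]. field_simplify; [|lra]. unfold Rdiv. nra. }
 pose proof (sin_gt_0 _ (proj1 Hp) (proj2 Hp)) as Hs.
 set (g := fun l : nat => - cos ((INR l - 1/2) * phi)).
 assert (E : forall l, sin (INR (S k) * th N l) * (2 * sin (phi / 2)) = g (S l) - g l).
 { intros l. unfold g. rewrite (S_INR l). replace ((INR l + 1 - 1/2) * phi) with (INR l * phi + phi / 2) by field.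
   replace ((INR l - 1/2) * phi) with (INR l * phi - phi / 2) by field. rewrite cos_plus, cos_minus.
   replace (INR (S k) * th N l) with (INR l * phi) by (unfold th, phi; field; pose proof (INRN_pos N HN); lra). ring. }
 assert (T : sum_f_R0 (fun l => sin (INR (S k) * th N l)) (N - 1) * (2 * sin (phi / 2)) = 0).
 { rewrite Rmult_comm, scal_sum. erewrite sum_eq; [|intros; apply E]. rewrite telesc.
   replace (S (N - 1)) with N by lia. unfold g. simpl INR.
   replace ((INR N - 1/2) * phi) with ((0 - 1/2) * phi + 2 * INR (S k) * PI) by (unfold phi; field; pose proof (INRN_pos N HN); lra).
   rewrite cos_period. ring. }
 apply Rmult_integral in T. destruct T; auto. lra. Qed.

Lemma sum_one (N : nat) (HN : (0 < N)%nat) : sum_f_R0 (fun _ => 1) (N - 1) = INR N.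
Proof. rewrite sum_cte. replace (S (N - 1)) with N by lia. ring. Qed.

Lemma sumC (N : nat) (HN : (0 < N)%nat) k : (k < N)%nat -> sum_f_R0 (fun l => cos (INR k * th N l)) (N - 1) = if Nat.eq_dec k 0 then INR N else 0.
Proof. intros Hk. destruct (Nat.eq_dec k 0) as [->|Hk0].
 - erewrite sum_eq; [apply (sum_one N HN)|]. intros; simpl; rewrite Rmult_0_l, cos_0; auto.
 - apply sumC0; lia. Qed.

Lemma sumCd (N : nat) (HN : (0 < N)%nat) n m : (n < N)%nat -> (m < N)%nat ->
  sum_f_R0 (fun l => cos ((INR m - INR n) * th N l)) (N - 1) = if Nat.eq_dec n m then INR N else 0.
Proof. intros Hn Hm. destruct (Nat.eq_dec n m) as [->|Hnm].
 - erewrite sum_eq; [apply (sum_one N HN)|]. intros; rewrite Rminus_diag, Rmult_0_l, cos_0; auto.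
 - destruct (Nat.lt_ge_cases n m).
   + erewrite sum_eq; [apply (sumC0 N HN (m - n)); lia|]. intros; rewrite minus_INR by lia; reflexivity.
   + erewrite sum_eq; [apply (sumC0 N HN (n - m)); lia|]. intros; rewrite minus_INR by lia.
     replace ((INR m - INR n) * th N i) with (- ((INR n - INR m) * th N i)) by ring. apply cos_neg. Qed.

Lemma sumSd (N : nat) (HN : (0 < N)%nat) n m : (n < N)%nat -> (m < N)%nat ->
  sum_f_R0 (fun l => sin ((INR m - INR n) * th N l)) (N - 1) = 0.
Proof. intros Hn Hm. destruct (Nat.lt_ge_cases n m).
 + erewrite sum_eq; [apply (sumS0 N HN (m - n)); lia|]. intros; rewrite minus_INR by lia; reflexivity.
 + replace 0 with (- 0) by ring. rewrite <- (sumS0 N HN (n - m)) by lia.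
   replace (- sum_f_R0 (fun l : nat => sin (INR (n - m) * th N l)) (N - 1)) with (-1 * sum_f_R0 (fun l : nat => sin (INR (n - m) * th N l)) (N - 1)) by ring.
   rewrite <- sum_scal_l. apply sum_eq. intros; rewrite minus_INR by lia.
   replace ((INR m - INR n) * th N i) with (- ((INR n - INR m) * th N i)) by ring. rewrite sin_neg; ring. Qed.

Lemma AB_sum (N : nat) (HN : (0 < N)%nat) al be ga de n m : (n + m < N)%nat ->
  sum_f_R0 (fun l => (al * cos (INR n * th N l) - be * sin (INR n * th N l)) * (ga * cos (INR m * th N l) + de * sin (INR m * th N l))) (N - 1)
  = if Nat.eq_dec n m then (if Nat.eq_dec n 0 then INR N * al * ga else INR N / 2 * (al * ga - be * de)) else 0.
Proof. intros Hnm.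
 assert (E : forall l, (al * cos (INR n * th N l) - be * sin (INR n * th N l)) * (ga * cos (INR m * th N l) + de * sin (INR m * th N l)) =
   (al * ga + be * de) / 2 * cos (INR (n + m) * th N l) + (al * ga - be * de) / 2 * cos ((INR m - INR n) * th N l)
   + (al * de - be * ga) / 2 * sin (INR (n + m) * th N l) + (al * de + be * ga) / 2 * sin ((INR m - INR n) * th N l)).
 { intros l. rewrite plus_INR. replace ((INR n + INR m) * th N l) with (INR n * th N l + INR m * th N l) by ring.
   replace ((INR m - INR n) * th N l) with (INR m * th N l - INR n * th N l) by ring.
   rewrite cos_plus, cos_minus, sin_plus, sin_minus. field. }
 erewrite sum_eq; [|intros; apply E]. rewrite !sum_plus, !sum_scal_l.
 rewrite sumC, sumCd, sumS0, sumSd by lia.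
 destruct (Nat.eq_dec n m) as [Heq|H1].
 - subst n. destruct (Nat.eq_dec (m + m) 0); destruct (Nat.eq_dec m 0); try lia; field.
 - destruct (Nat.eq_dec (n + m) 0); try lia. ring. Qed.

Lemma sum_delta (f : nat -> R) n K : (n <= K)%nat ->
  sum_f_R0 (fun m => if Nat.eq_dec n m then f m else 0) K = f n.
Proof. intros H. induction K.
 - assert (n = 0%nat) by lia; subst; simpl; reflexivity.
 - simpl. destruct (Nat.eq_dec n (S K)) as [->|Hn].
   + rewrite (sum_eq _ (fun _ => 0)). rewrite sum_single_zero; ring.
     intros i Hi; destruct (Nat.eq_dec (S K) i); [lia|auto].
   + rewrite IHK by lia; ring. Qed.

Lemma sum_swap (f : nat -> nat -> R) N K : sum_f_R0 (fun l => sum_f_R0 (fun n => f l n) K) N = sum_f_R0 (fun n => sum_f_R0 (fun l => f l n) N) K.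
Proof. induction N; simpl. reflexivity. rewrite IHN, <- sum_plus. reflexivity. Qed.

Lemma sum_prod (f g : nat -> R) K M : sum_f_R0 f K * sum_f_R0 g M = sum_f_R0 (fun n => sum_f_R0 (fun m => f n * g m) M) K.
Proof. rewrite Rmult_comm, scal_sum. apply sum_eq; intros. rewrite <- sum_scal_l. apply sum_eq; intros; ring. Qed.

Definition Af (al be : nat -> R) N n l := al n * cos (INR n * th N l) - be n * sin (INR n * th N l).
Definition Bf (ga de : nat -> R) N m l := ga m * cos (INR m * th N l) + de m * sin (INR m * th N l).

Definition Vf (al be ga de : nat -> R) N n := if Nat.eq_dec n 0 then INR N * al n * ga n else INR N / 2 * (al n * ga n - be n * de n).

Lemma AB_sum' al be ga de N n m : (0 < N)%nat -> (n + m < N)%nat ->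
  sum_f_R0 (fun l => Af al be N n l * Bf ga de N m l) (N - 1) = if Nat.eq_dec n m then Vf al be ga de N n else 0.
Proof. intros. unfold Af, Bf, Vf. rewrite AB_sum by auto. destruct (Nat.eq_dec n m); subst; reflexivity. Qed.

Lemma double_sum (al be ga de : nat -> R) K : al 0%nat = 1 -> be 0%nat = 0 ->
  let N := (2 * K + 2)%nat in
  sum_f_R0 (fun l => (2 * sum_f_R0 (fun n => Af al be N n l) K - 1) * sum_f_R0 (fun m => Bf ga de N m l) K) (N - 1)
  = INR N * sum_f_R0 (fun n => al n * ga n - be n * de n) K.
Proof. intros H0 H1 N. assert (HN : (0 < N)%nat) by (unfold N; lia).
 assert (HA0 : forall l, Af al be N 0 l = 1). { intros; unfold Af; rewrite H0, H1; simpl INR; rewrite Rmult_0_l, cos_0, sin_0; ring. }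
 assert (E1 : forall l, (2 * sum_f_R0 (fun n => Af al be N n l) K - 1) * sum_f_R0 (fun m => Bf ga de N m l) K =
   2 * sum_f_R0 (fun n => sum_f_R0 (fun m => Af al be N n l * Bf ga de N m l) K) K
   - sum_f_R0 (fun m => Af al be N 0 l * Bf ga de N m l) K).
 { intros l. rewrite <- sum_prod. rewrite HA0. rewrite (sum_scal_l (fun m => Bf ga de N m l) 1). ring. }
 rewrite (sum_eq _ _ _ (fun l _ => E1 l)). rewrite sum_minus_, sum_scal_l.
 rewrite sum_swap. rewrite (sum_swap (fun l m => Af al be N 0 l * Bf ga de N m l)).
 rewrite (sum_eq (fun m => sum_f_R0 (fun l => Af al be N 0 l * Bf ga de N m l) (N - 1)) (fun m => if Nat.eq_dec 0 m then Vf al be ga de N 0 else 0)).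
 2:{ intros m Hm. apply AB_sum'; unfold N in *; lia. }
 rewrite (sum_delta (fun _ => Vf al be ga de N 0) 0 K) by lia.
 rewrite (sum_eq (fun n => sum_f_R0 (fun l => sum_f_R0 (fun m => Af al be N n l * Bf ga de N m l) K) (N - 1)) (fun n => Vf al be ga de N n)).
 2:{ intros n Hn. rewrite sum_swap. rewrite (sum_eq _ (fun m => if Nat.eq_dec n m then Vf al be ga de N n else 0)).
     apply (sum_delta (fun _ => Vf al be ga de N n)); auto. intros m Hm; apply AB_sum'; unfold N in *; lia. }
 assert (E2 : forall n, Vf al be ga de N n = INR N / 2 * (al n * ga n - be n * de n) + if Nat.eq_dec 0 n then INR N / 2 * ga 0%nat else 0).
 { intros n. unfold Vf. destruct (Nat.eq_dec n 0); destruct (Nat.eq_dec 0 n); try lia. subst. rewrite H0, H1. field. ring. }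
 rewrite (sum_eq _ _ _ (fun n _ => E2 n)). rewrite sum_plus, sum_scal_l.
 rewrite (sum_delta (fun _ => INR N / 2 * ga 0%nat) 0 K) by lia.
 unfold Vf. simpl. rewrite H0. field. Qed.


Lemma Cpow_polar rho t n : Cpow (mkC (rho * cos t) (rho * sin t)) n = mkC (rho ^ n * cos (INR n * t)) (rho ^ n * sin (INR n * t)).
Proof. induction n. simpl. rewrite Rmult_0_l, cos_0, sin_0. unfold RtoC. f_equal; ring.
 simpl Cpow. rewrite IHn. rewrite S_INR. replace ((INR n + 1) * t) with (INR n * t + t) by ring.
 rewrite cos_plus, sin_plus. apply Cext; Cs; ring. Qed.

Lemma Cpow_cunit t n : Cpow (mkC (cos t) (- sin t)) n = mkC (cos (INR n * t)) (- sin (INR n * t)).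
Proof. induction n. simpl. rewrite Rmult_0_l, cos_0, sin_0. unfold RtoC. f_equal; ring.
 simpl Cpow. rewrite IHn. rewrite S_INR. replace ((INR n + 1) * t) with (INR n * t + t) by ring.
 rewrite cos_plus, sin_plus. apply Cext; Cs; ring. Qed.

Lemma Cnorm_polar rho t : 0 <= rho -> Cnorm (mkC (rho * cos t) (rho * sin t)) = rho.
Proof. intros H. unfold Cnorm; simpl. pose proof (sin2_cos2 t). unfold Rsqr in H0.
 replace (rho * cos t * (rho * cos t) + rho * sin t * (rho * sin t)) with (Rsqr rho) by (unfold Rsqr; nra).
 apply sqrt_Rsqr; auto. Qed.

Lemma err_prod w wK R RK e1 e2 g1 g2 : Rabs (w - wK) <= e1 -> Rabs (R - RK) <= e2 -> Rabs RK <= g2 -> Rabs wK <= g1 ->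
  e2 <= g2 -> Rabs (w * R - wK * RK) <= e1 * (2 * g2) + g1 * e2.
Proof. intros H1 H2 H3 H4 H5.
 replace (w * R - wK * RK) with ((w - wK) * R + wK * (R - RK)) by ring.
 eapply Rle_trans; [apply Rabs_triang|]. rewrite !Rabs_mult.
 assert (Rabs R <= 2 * g2). { replace R with ((R - RK) + RK) by ring. eapply Rle_trans; [apply Rabs_triang|]. lra. }
 pose proof (Rabs_pos (w - wK)); pose proof (Rabs_pos R); pose proof (Rabs_pos wK); pose proof (Rabs_pos (R - RK)).
 apply Rplus_le_compat; apply Rmult_le_compat; auto. Qed.

Lemma final_lim x B r : 0 <= r < 1 -> 0 <= B -> (forall K, - (B * r ^ S K) <= x) -> 0 <= x.
Proof. intros Hr HB H. destruct (Rle_or_lt 0 x) as [h|h]; auto.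
 destruct (pow_lt_1_zero r ltac:(rewrite Rabs_right; lra) (- x / (B + 1))) as [K HK].
 { apply Rmult_lt_0_compat; [lra| apply Rinv_0_lt_compat; lra]. }
 specialize (HK (S K) ltac:(lia)). specialize (H K). rewrite Rabs_right in HK by (apply Rle_ge, pow_le; lra).
 assert (0 <= r ^ S K) by (apply pow_le; lra).
 assert (B * r ^ S K <= (B + 1) * r ^ S K) by nra.
 assert ((B + 1) * r ^ S K < - x). { apply Rmult_lt_compat_l with (r := B + 1) in HK; [|lra].
   replace ((B + 1) * (- x / (B + 1))) with (- x) in HK by (field; lra). lra. }
 lra. Qed.

Lemma sum_nonneg (f : nat -> R) N : (forall i, (i <= N)%nat -> 0 <= f i) -> 0 <= sum_f_R0 f N.
Proof. intros H. rewrite <- (sum_single_zero N). apply sum_Rle. auto. Qed.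

Lemma sum_abs_bound (f : nat -> R) N e : (forall i, (i <= N)%nat -> Rabs (f i) <= e) -> Rabs (sum_f_R0 f N) <= e * INR (S N).
Proof. intros H. eapply Rle_trans; [apply sum_f_R0_triangle|]. rewrite <- sum_cte. apply sum_Rle. auto. Qed.


Lemma tail_le G r rr K : 0 <= G -> 0 <= r <= rr -> G * r ^ S K <= G * rr ^ S K.
Proof. intros. apply Rmult_le_compat_l; auto. apply pow_incr; lra. Qed.

Lemma WK c q : bndall c -> bndall q -> q 0%nat = RtoC 1 ->
 (forall w, Cnorm w < 1 -> 0 <= Re (ps c w)) ->
 (forall w, Cnorm w < 1 -> 1/2 <= Re (ps q w)) ->
 forall z, Cnorm z < 1 -> 0 <= Re (ps (hadamard c q) z).
Proof.
 intros Hc Hq Hq0 Pc Pq z Hz.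
 set (s0 := Cnorm z). assert (Hs0 : 0 <= s0) by apply Cnorm_ge0.
 set (rho := (1 + s0) / 2). assert (Hrho : 0 < rho < 1) by (unfold rho, s0 in *; lra).
 assert (Hsr : s0 < rho) by (unfold rho, s0 in *; lra).
 set (z0 := Cmul (RtoC (/ rho)) z). set (s1 := s0 / rho).
 assert (Hz0 : Cnorm z0 = s1).
 { unfold z0, s1; rewrite Cnorm_mul, Cnorm_RtoC, Rabs_right. unfold s0; field; lra. left; apply Rinv_0_lt_compat; lra. }
 assert (Hs1 : 0 <= s1 < 1).
 { unfold s1. split. apply Rmult_le_pos; [lra|left; apply Rinv_0_lt_compat; lra].
   apply Rmult_lt_reg_r with rho; [lra|]. unfold Rdiv; rewrite Rmult_assoc, Rinv_l; lra. }
 destruct (geo_bound q rho Hq) as [Cq [rq [Hrq Bq]]]. lra.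
 destruct (geo_bound c s1 Hc Hs1) as [Cc [rc [Hrc Bc]]].
 destruct (geo_bound (hadamard c q) s0 (bndall_had c q Hc Hq)) as [Cm [rm [Hrm Bm]]]. lra.
 set (v := fun t => mkC (rho * cos t) (rho * sin t)).
 set (ze := fun t => Cmul (mkC (cos t) (- sin t)) z0).
 assert (Hv : forall t, Cnorm (v t) = rho) by (intros; unfold v; apply Cnorm_polar; lra).
 assert (Hze : forall t, Cnorm (ze t) = s1).
 { intros t; unfold ze; rewrite Cnorm_mul, Hz0. replace (mkC (cos t) (- sin t)) with (mkC (1 * cos (- t)) (1 * sin (- t))).
   rewrite Cnorm_polar; lra. rewrite cos_neg, sin_neg; f_equal; ring. }
 set (al := fun n => Re (q n) * rho ^ n). set (be := fun n => Im (q n) * rho ^ n).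
 set (ga := fun n => Re (Cmul (c n) (Cpow z0 n))). set (de := fun n => Im (Cmul (c n) (Cpow z0 n))).
 assert (Tq : forall t n, Re (Cmul (q n) (Cpow (v t) n)) = al n * cos (INR n * t) - be n * sin (INR n * t)).
 { intros; unfold v; rewrite Cpow_polar; unfold al, be; Cs; ring. }
 assert (Tc : forall t n, Re (Cmul (c n) (Cpow (ze t) n)) = ga n * cos (INR n * t) + de n * sin (INR n * t)).
 { intros; unfold ze; rewrite Cpow_mul, Cpow_cunit; unfold ga, de; Cs; ring. }
 assert (Tm : forall n, al n * ga n - be n * de n = Re (Cmul (hadamard c q n) (Cpow z n))).
 { intros n; unfold al, be, ga, de, z0, hadamard. rewrite Cpow_mul, Cpow_RtoC, pow_inv. Cs.
   assert (rho ^ n <> 0) by (apply pow_nonzero; lra). field. auto. }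
 assert (Hal0 : al 0%nat = 1) by (unfold al; rewrite Hq0; simpl; ring).
 assert (Hbe0 : be 0%nat = 0) by (unfold be; rewrite Hq0; simpl; ring).
 set (rr := Rmax rq (Rmax rc rm)).
 assert (Hrr : 0 <= rr < 1). { unfold rr. split. eapply Rle_trans; [|apply Rmax_l]; lra.
   apply Rmax_lub_lt; [lra|apply Rmax_lub_lt; lra]. }
 assert (Hrq' : rq <= rr) by (unfold rr; apply Rmax_l).
 assert (Hrc' : rc <= rr) by (unfold rr; eapply Rle_trans; [|apply Rmax_r]; apply Rmax_l).
 assert (Hrm' : rm <= rr) by (unfold rr; eapply Rle_trans; [|apply Rmax_r]; apply Rmax_r).
 set (Gq := Cq / (1 - rq)). set (Gc := Cc / (1 - rc)). set (Gm := Cm / (1 - rm)).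
 assert (HCq : 0 <= Cq). { assert (0 <= Cq * rq ^ 0) by (eapply Rle_trans; [apply Cnorm_ge0|apply (Bq (v 0) 0%nat); rewrite Hv; lra]). simpl in H; lra. }
 assert (HCc : 0 <= Cc). { assert (0 <= Cc * rc ^ 0) by (eapply Rle_trans; [apply Cnorm_ge0|apply (Bc (ze 0) 0%nat); rewrite Hze; lra]). simpl in H; lra. }
 assert (HCm : 0 <= Cm). { assert (0 <= Cm * rm ^ 0) by (eapply Rle_trans; [apply Cnorm_ge0|apply (Bm z 0%nat); unfold s0; lra]). simpl in H; lra. }
 assert (HGq : 0 <= Gq) by (unfold Gq; apply Rmult_le_pos; [auto|left; apply Rinv_0_lt_compat; lra]).
 assert (HGc : 0 <= Gc) by (unfold Gc; apply Rmult_le_pos; [auto|left; apply Rinv_0_lt_compat; lra]).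
 assert (HGm : 0 <= Gm) by (unfold Gm; apply Rmult_le_pos; [auto|left; apply Rinv_0_lt_compat; lra]).
 apply (final_lim _ (4 * Gq * Gc + (2 * Gq + 1) * Gc + Gm) rr Hrr). nra.
 intros K.
 set (x := rr ^ S K). assert (Hx1 : 0 <= x <= 1).
 { unfold x; split. apply pow_le; lra. rewrite <- (pow1 (S K)). apply pow_incr; lra. }
 assert (Hxq : rq ^ S K <= x) by (apply pow_incr; lra).
 assert (Hxc : rc ^ S K <= x) by (apply pow_incr; lra).
 assert (Hxm : rm ^ S K <= x) by (apply pow_incr; lra).
 pose proof (double_sum al be ga de K Hal0 Hbe0) as D. cbv zeta in D.
 set (N := (2*K+2)%nat) in D.
 assert (HN : 0 < INR N) by (apply lt_0_INR; unfold N; lia).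
 set (w := fun l => 2 * Re (ps q (v (th N l))) - 1).
 set (R := fun l => Re (ps c (ze (th N l)))).
 set (wK := fun l => 2 * sum_f_R0 (fun n => Af al be N n l) K - 1).
 set (RK := fun l => sum_f_R0 (fun m => Bf ga de N m l) K).
 set (MK := sum_f_R0 (fun n => Re (Cmul (hadamard c q n) (Cpow z n))) K).
 assert (Ha : 0 <= sum_f_R0 (fun l => w l * R l) (N - 1)).
 { apply sum_nonneg; intros; unfold w, R; apply Rmult_le_pos.
   specialize (Pq (v (th N i)) ltac:(rewrite Hv; lra)); lra. apply Pc; rewrite Hze; lra. }
 assert (Hb : sum_f_R0 (fun l => wK l * RK l) (N - 1) = INR N * MK).
 { unfold wK, RK, MK. rewrite D. f_equal. apply sum_eq; intros; apply Tm. }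
 set (errK := 2 * (Gq * x) * (2 * Gc) + (2 * Gq + 1) * (Gc * x)).
 assert (Hc' : forall l, (l <= N - 1)%nat -> Rabs (w l * R l - wK l * RK l) <= errK).
 { intros l _. unfold errK. apply err_prod.
   - destruct (cv_geomC (fun n => Cmul (q n) (Cpow (v (th N l)) n)) Cq rq Hrq) as [_ [T1 T2]].
     { intros n; apply Bq; rewrite Hv; lra. }
     specialize (T1 K). change (Csum _) with (ps q (v (th N l))) in T1.
     rewrite (sum_eq _ (fun n => Af al be N n l)) in T1 by (intros; unfold Af; apply Tq).
     unfold w, wK. replace (2 * Re (ps q (v (th N l))) - 1 - (2 * sum_f_R0 (fun n : nat => Af al be N n l) K - 1))
       with (2 * (Re (ps q (v (th N l))) - sum_f_R0 (fun n : nat => Af al be N n l) K)) by ring.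
     rewrite Rabs_mult, Rabs_right by lra. replace (Cq * rq ^ S K / (1 - rq)) with (Gq * rq ^ S K) in T1 by (unfold Gq; field; lra).
     assert (Gq * rq ^ S K <= Gq * x) by (apply Rmult_le_compat_l; auto). lra.
   - destruct (cv_geomC (fun n => Cmul (c n) (Cpow (ze (th N l)) n)) Cc rc Hrc) as [_ [T1 T2]].
     { intros n; apply Bc; rewrite Hze; lra. }
     specialize (T1 K). change (Csum _) with (ps c (ze (th N l))) in T1.
     rewrite (sum_eq _ (fun n => Bf ga de N n l)) in T1 by (intros; unfold Bf; apply Tc).
     unfold R, RK. replace (Cc * rc ^ S K / (1 - rc)) with (Gc * rc ^ S K) in T1 by (unfold Gc; field; lra).
     assert (Gc * rc ^ S K <= Gc * x) by (apply Rmult_le_compat_l; auto). lra.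
   - destruct (cv_geomC (fun n => Cmul (c n) (Cpow (ze (th N l)) n)) Cc rc Hrc) as [_ [T1 T2]].
     { intros n; apply Bc; rewrite Hze; lra. }
     specialize (T2 K). rewrite (sum_eq _ (fun n => Bf ga de N n l)) in T2 by (intros; unfold Bf; apply Tc).
     exact T2.
   - destruct (cv_geomC (fun n => Cmul (q n) (Cpow (v (th N l)) n)) Cq rq Hrq) as [_ [T1 T2]].
     { intros n; apply Bq; rewrite Hv; lra. }
     specialize (T2 K). rewrite (sum_eq _ (fun n => Af al be N n l)) in T2 by (intros; unfold Af; apply Tq).
     unfold wK. eapply Rle_trans; [apply Rabs_triang|]. rewrite Rabs_mult, Rabs_Ropp, Rabs_R1, (Rabs_right 2) by lra.
     fold Gq in T2. lra.
   - assert (Gc * x <= Gc * 1) by (apply Rmult_le_compat_l; lra). lra. }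
 assert (Hd : Rabs (Re (ps (hadamard c q) z) - MK) <= Gm * x).
 { destruct (cv_geomC (fun n => Cmul (hadamard c q n) (Cpow z n)) Cm rm Hrm) as [_ [T1 T2]].
   { intros n; apply Bm; unfold s0; lra. }
   specialize (T1 K). change (Csum _) with (ps (hadamard c q) z) in T1.
   replace (Cm * rm ^ S K / (1 - rm)) with (Gm * rm ^ S K) in T1 by (unfold Gm; field; lra).
   assert (Gm * rm ^ S K <= Gm * x) by (apply Rmult_le_compat_l; auto). unfold MK. lra. }
 assert (He : Rabs (sum_f_R0 (fun l => w l * R l - wK l * RK l) (N - 1)) <= errK * INR N).
 { replace N with (S (N - 1)) at 2 by (unfold N; lia). apply sum_abs_bound. auto. }
 rewrite sum_minus_, Hb in He.
 assert (MK >= - errK).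
 { destruct (Rle_or_lt (- errK) MK); [lra|]. exfalso.
   pose proof (Rle_abs (sum_f_R0 (fun l : nat => w l * R l) (N - 1) - INR N * MK)).
   assert (INR N * MK < INR N * (- errK)) by (apply Rmult_lt_compat_l; auto). nra. }
 assert (Eb : (4 * Gq * Gc + (2 * Gq + 1) * Gc + Gm) * x = errK + Gm * x) by (unfold errK; ring).
 rewrite Eb. pose proof (Rle_abs (Re (ps (hadamard c q) z) - MK)).
 pose proof (Rle_abs (- (Re (ps (hadamard c q) z) - MK))). rewrite Rabs_Ropp in H1. lra.
Qed.



Lemma ps_cv_unique x w l : Cseries_cv (fun n => Cmul (x n) (Cpow w n)) l -> ps x w = l.
Proof. intros H. unfold ps. apply Csum_unique; auto. Qed.

Lemma ps_zero x : ps x C0 = x 0%nat.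
Proof. apply ps_cv_unique. eapply Cseries_cv_ext; [|apply (Cseries_cv_single (x 0%nat))].
 intros [|n]; simpl. Cring. Cring. Qed.

Lemma geom_sum w t : 0 <= t < 1 -> Cnorm w <= t ->
  exists S, Cseries_cv (fun n => Cpow w n) S /\ 1 / (1 + t) <= Re S.
Proof. intros Ht Hw.
 destruct (cv_geomC (fun n => Cpow w n) 1 (Cnorm w)) as [H1 _].
 { split; [apply Cnorm_ge0|lra]. } { intros; rewrite Cnorm_pow; lra. }
 exists (Csum (fun n => Cpow w n)). split; auto.
 set (S := Csum (fun n => Cpow w n)) in *.
 assert (H2 : Cseries_cv (fun n => Cadd (single (RtoC 1) n) (Cmul w (shiftC (fun n => Cpow w n) n))) (Cadd (RtoC 1) (Cmul w S))).
 { apply Cseries_cv_add. apply Cseries_cv_single. apply Cseries_cv_scal. apply Cseries_cv_shift; auto. }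
 assert (H3 : Cseries_cv (fun n => Cpow w n) (Cadd (RtoC 1) (Cmul w S))).
 { eapply Cseries_cv_ext; [|exact H2]. intros [|n]; simpl; Cring. }
 assert (E : S = Cadd (RtoC 1) (Cmul w S)).
 { unfold S at 1. apply Csum_unique; auto. }
 destruct S as [a b]. destruct w as [x y]. unfold Cadd, Cmul, RtoC in E; simpl in E. injection E; intros E2 E1.
 simpl. pose proof (Cnorm_sq (mkC x y)) as H. pose proof (Cnorm_ge0 (mkC x y)).
 set (nn := Cnorm (mkC x y)) in *. simpl in H.
 assert (Hx : x * x + y * y <= t * t) by nra.
 assert (x <= t) by nra. assert (- t <= x) by nra.
 assert (ED : a * ((1 - x) * (1 - x) + y * y) = 1 - x).
 { assert (e1: a*(1-x) + y*b = 1) by lra. assert (e2: b*(1-x) = y*a) by lra.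
   replace (a*((1-x)*(1-x)+y*y)) with ((a*(1-x)+y*b)*(1-x) - y*(b*(1-x) - y*a)) by ring. rewrite e1, e2. ring. }
 assert (HD : 0 < (1 - x) * (1 - x) + y * y) by nra.
 assert (K : (1 + t) * (1 - x) >= (1 - x) * (1 - x) + y * y) by nra.
 apply Rmult_le_reg_l with ((1 + t) * ((1 - x) * (1 - x) + y * y)). nra.
 replace ((1 + t) * ((1 - x) * (1 - x) + y * y) * (1 / (1 + t))) with ((1 - x) * (1 - x) + y * y) by (field; lra).
 replace ((1 + t) * ((1 - x) * (1 - x) + y * y) * a) with ((1 + t) * (a * ((1 - x) * (1 - x) + y * y))) by ring.
 rewrite ED. lra. Qed.

Definition kp (t lam : R) : nat -> Cplx := fun n => match n with O => RtoC 1 | S m => RtoC (t ^ n / (1 - lam)) end.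

Lemma bndall_kp t lam : 0 <= t < 1 -> lam < 1 -> bndall (kp t lam).
Proof. intros Ht Hl r Hr. exists (1 + 1 / (1 - lam)). intros [|n].
 - simpl. rewrite Cnorm_RtoC, Rabs_R1. assert (0 < 1 / (1 - lam)) by (apply Rdiv_lt_0_compat; lra). lra.
 - cbv beta iota delta [kp]. rewrite Cnorm_RtoC, Rabs_right.
   2:{ apply Rle_ge, Rmult_le_pos; [apply pow_le; lra|left; apply Rinv_0_lt_compat; lra]. }
   assert (t ^ S n * r ^ S n <= 1). { rewrite <- Rpow_mult_distr. rewrite <- (pow1 (S n)). apply pow_incr; nra. }
   assert (0 < 1 / (1 - lam)) by (apply Rdiv_lt_0_compat; lra).
   replace (t ^ S n / (1 - lam) * r ^ S n) with ((t ^ S n * r ^ S n) * (1 / (1 - lam))) by (field; lra). nra. Qed.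

Lemma Re_kp t lam : 0 < t < 1 -> lam = (1 - t) / (1 + t) ->
  forall w, Cnorm w < 1 -> 1/2 <= Re (ps (kp t lam) w).
Proof. intros Ht Hl w Hw.
 assert (Hlam : 0 < 1 - lam) by (rewrite Hl; apply Rmult_lt_reg_r with (1 + t); [lra|]; field_simplify; lra).
 destruct (geom_sum (Cmul (RtoC t) w) t) as [S [HS1 HS2]]. lra.
 { rewrite Cnorm_mul, Cnorm_RtoC, Rabs_right by lra. pose proof (Cnorm_ge0 w). nra. }
 assert (E : ps (kp t lam) w = Cadd (RtoC (1 - 1 / (1 - lam))) (Cmul (RtoC (1 / (1 - lam))) S)).
 { apply ps_cv_unique. eapply Cseries_cv_ext; [|apply (Cseries_cv_add _ _ _ _ (Cseries_cv_single _) (Cseries_cv_scal (RtoC (1 / (1 - lam))) _ _ HS1))].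
   intros [|n]. simpl. apply Cext; Cs; field; lra.
   simpl kp. rewrite Cpow_mul, Cpow_RtoC. unfold single. apply Cext; Cs; field; lra. }
 rewrite E. Cs. rewrite Rmult_0_l, Rminus_0_r.
 assert (1 / (1 + t) = (1 + lam) / 2) by (rewrite Hl; field; lra).
 apply Rmult_le_reg_l with (1 - lam); [lra|].
 replace ((1 - lam) * (1 - 1 / (1 - lam) + 1 / (1 - lam) * Re S)) with ((1 - lam) - 1 + Re S) by (field; lra). nra. Qed.

Lemma SK c q : bndall c -> bndall q -> q 0%nat = RtoC 1 ->
 (forall w, Cnorm w < 1 -> 0 < Re (ps c w)) ->
 (forall w, Cnorm w < 1 -> 1/2 <= Re (ps q w)) ->
 forall z, Cnorm z < 1 -> 0 < Re (ps (hadamard c q) z).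
Proof.
 intros Hc Hq Hq0 Pc Pq z Hz. pose proof (Cnorm_ge0 z).
 set (t := (1 + Cnorm z) / 2). assert (Ht : 0 < t < 1) by (unfold t; lra).
 set (lam := (1 - t) / (1 + t)).
 assert (Hlam : 0 < lam < 1). { unfold lam; split. apply Rdiv_lt_0_compat; lra.
   apply Rmult_lt_reg_r with (1 + t); [lra|]. field_simplify; lra. }
 set (z1 := Cmul (RtoC (/ t)) z).
 assert (Hz1 : Cnorm z1 < 1). { unfold z1; rewrite Cnorm_mul, Cnorm_RtoC, Rabs_right.
   apply Rmult_lt_reg_l with t; [lra|]. rewrite <- Rmult_assoc, Rinv_r by lra. unfold t in *; lra.
   left; apply Rinv_0_lt_compat; lra. }
 set (e := hadamard c (kp t lam)).
 assert (He : forall w, Cnorm w < 1 -> 0 <= Re (ps e w)).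
 { apply WK; auto. apply bndall_kp; lra. intros; left; apply Pc; auto. apply Re_kp; auto. }
 assert (Hm : 0 <= Re (ps (hadamard e q) z1)).
 { apply WK; auto. apply bndall_had; auto. apply bndall_kp; lra. }
 assert (E : ps (hadamard c q) z = Cadd (Cmul (RtoC lam) (c 0%nat)) (Cmul (RtoC (1 - lam)) (ps (hadamard e q) z1))).
 { apply ps_cv_unique. eapply Cseries_cv_ext; [|apply (Cseries_cv_add _ _ _ _ (Cseries_cv_single _) (Cseries_cv_scal (RtoC (1 - lam)) _ _ (ps_cv (hadamard e q) z1 ltac:(apply bndall_had; [apply bndall_had; auto; apply bndall_kp; lra|auto]) Hz1)))].
   intros [|n].
   - unfold e, hadamard, kp, single. simpl Cpow. rewrite Hq0. apply Cext; Cs; ring.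
   - unfold e, hadamard, kp, single. unfold z1. rewrite Cpow_mul, Cpow_RtoC, pow_inv.
     assert (t ^ S n <> 0) by (apply pow_nonzero; lra).
     set (P := Cpow z (S n)). set (cc := c (S n)). set (qq := q (S n)).
     assert (t ^ n <> 0) by (apply pow_nonzero; lra). apply Cext; Cs; field; repeat split; try lra; auto. }
 rewrite E. Cs. rewrite !Rmult_0_l, !Rminus_0_r.
 pose proof (Pc C0 ltac:(rewrite Cnorm_C0; lra)). rewrite ps_zero in H0. nra. Qed.


Definition Fa (alpha : R) (a : nat -> Cplx) : nat -> Cplx :=
  fun k => Cadd (dcoef a k) (Cmul (RtoC alpha) (shiftC (dcoef (dcoef a)) k)).

Lemma bndall_Fa alpha a : bndall a -> bndall (Fa alpha a).
Proof. intros H. apply bndall_add. apply bndall_dcoef; auto. apply bndall_scal, bndall_shift, bndall_dcoef, bndall_dcoef; auto. Qed.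

Lemma ps_Fa alpha a z : bndall a -> Cnorm z < 1 ->
  Cadd (ps (dcoef a) z) (Cmul (RtoC alpha) (Cmul z (ps (dcoef (dcoef a)) z))) = ps (Fa alpha a) z.
Proof. intros Ha Hz. symmetry. apply ps_cv_unique.
 eapply Cseries_cv_ext; [|apply (Cseries_cv_add _ _ _ _ (ps_cv (dcoef a) z (bndall_dcoef a Ha) Hz)
   (Cseries_cv_scal (RtoC alpha) _ _ (Cseries_cv_scal z _ _ (Cseries_cv_shift _ _ (ps_cv (dcoef (dcoef a)) z (bndall_dcoef _ (bndall_dcoef a Ha)) Hz)))))].
 intros [|n]; unfold Fa; simpl shiftC.
 - set (u := dcoef a 0%nat). simpl Cpow. Cring.
 - set (u := dcoef a (S n)). set (v := dcoef (dcoef a) n). set (P := Cpow z n). simpl Cpow. fold P. Cring. Qed.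

Lemma Fa_had alpha a p : Fa alpha (hadamard a p) = hadamard (Fa alpha a) (fun k => p (S k)).
Proof. apply functional_extensionality. intros [|k]; unfold Fa, dcoef, hadamard, shiftC.
 - Cring.
 - set (A := a (S (S k))). set (P := p (S (S k))). set (x := INR (S k)). set (y := INR (S (S k))). Cring. Qed.

Lemma eps_exists G : exists e, Re (Cmul e G) = - Cnorm G /\ forall w, - Cnorm w <= Re (Cmul e w).
Proof. destruct (Req_dec (Cnorm G) 0) as [H|H].
 - exists C0. split. rewrite H. Cs. ring. intros w. Cs. pose proof (Cnorm_ge0 w). lra.
 - pose proof (Cnorm_ge0 G). set (n := Cnorm G) in *. exists (mkC (- Re G / n) (Im G / n)). split.
   + Cs. pose proof (Cnorm_sq G). fold n in H1. apply Rmult_eq_reg_l with n; [|auto]. replace (n * ((- Re G / n) * Re G - (Im G / n) * Im G)) with (- (Re G * Re G + Im G * Im G)) by (field; auto). rewrite <- H1. ring.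
   + intros w. Cs. pose proof (CS (Re G) (Im G) (Re w) (Im w)). destruct G as [g1 g2]. destruct w as [w1 w2]. simpl in *.
     fold n in H1. apply Rmult_le_reg_l with n. lra.
     replace (n * ((- g1 / n) * w1 - (g2 / n) * w2)) with (- (g1 * w1 + g2 * w2)) by (field; auto).
     lra. Qed.

Lemma ps_shift_mul p w : bndall p -> Cnorm w < 1 -> p 0%nat = C0 -> ps p w = Cmul w (ps (fun k => p (S k)) w).
Proof. intros Hp Hw H0. apply ps_cv_unique.
 eapply Cseries_cv_ext; [|apply (Cseries_cv_scal w _ _ (Cseries_cv_shift _ _ (ps_cv (fun k => p (S k)) w (bndall_unshift p Hp) Hw)))].
 intros [|n]; simpl shiftC.
 - rewrite H0. simpl. Cring.
 - set (u := p (S n)). set (P := Cpow w n). simpl Cpow. fold P. Cring. Qed.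

Lemma Cdiv_mul w X : w <> C0 -> Cdiv (Cmul w X) w = X.
Proof. intros H. destruct w as [x y]. assert (x * x + y * y <> 0).
 { intros E. apply H. assert (x = 0) by nra. assert (y = 0) by nra. subst; reflexivity. }
 unfold Cdiv, Cinv. apply Cext; Cs; field; auto. Qed.

Theorem theorem4p7 (alpha beta : R) (a b p : nat -> Cplx) :
  0 <= alpha -> 0 <= beta -> beta < 1 ->
  in_WH0 alpha beta a b ->
  analytic_D p -> p 0%nat = C0 -> p 1%nat = RtoC 1 ->
  (forall z : Cplx, Cnorm z < 1 -> z <> C0 -> Re (Cdiv (ps p z) z) > 1 / 2) ->
  in_WH0 alpha beta (hadamard a p) (hadamard b p).
Proof.
 intros Hal Hbe Hb1 [[HA [HB [a0 [a1 [b0 b1]]]]] Hineq] HP p0 p1 Hphi.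
 pose proof (analytic_bndall a HA) as Ba. pose proof (analytic_bndall b HB) as Bb. pose proof (analytic_bndall p HP) as Bp.
 set (q := fun k => p (S k)). assert (Bq : bndall q) by (apply bndall_unshift; auto).
 assert (q0 : q 0%nat = RtoC 1) by exact p1.
 assert (Pq : forall w, Cnorm w < 1 -> 1/2 <= Re (ps q w)).
 { intros w Hw. destruct (classic (w = C0)) as [->|Hne].
   - rewrite ps_zero, q0. simpl. lra.
   - specialize (Hphi w Hw Hne). rewrite (ps_shift_mul p w Bp Hw p0), Cdiv_mul in Hphi by auto. fold q in Hphi. lra. }
 split; [split; [|split; [|split; [|split; [|split]]]]|].
 - apply bndall_analytic, bndall_had; auto.
 - apply bndall_analytic, bndall_had; auto.
 - unfold hadamard; rewrite a0, p0; Cring.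
 - unfold hadamard; rewrite a1, p1; Cring.
 - unfold hadamard; rewrite b0, p0; Cring.
 - unfold hadamard; rewrite b1, p1; Cring.
 - intros z Hz.
   rewrite (ps_Fa alpha (hadamard a p) z (bndall_had a p Ba Bp) Hz), (ps_Fa alpha (hadamard b p) z (bndall_had b p Bb Bp) Hz).
   rewrite !Fa_had. fold q.
   set (A := Fa alpha a). set (B := Fa alpha b).
   assert (BA : bndall A) by (apply bndall_Fa; auto). assert (BB : bndall B) by (apply bndall_Fa; auto).
   assert (HAB : forall w, Cnorm w < 1 -> Re (ps A w) - beta > Cnorm (ps B w)).
   { intros w Hw. specialize (Hineq w Hw). rewrite (ps_Fa alpha a w Ba Hw), (ps_Fa alpha b w Bb Hw) in Hineq.
     fold A B in Hineq. Cs. lra. }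
   set (G := ps (hadamard B q) z).
   destruct (eps_exists G) as [e [He1 He2]].
   set (c := fun n => Cadd (Cadd (A n) (Cmul e (B n))) (single (RtoC (- beta)) n)).
   assert (Bc : bndall c) by (apply bndall_add; [apply bndall_add; [auto|apply bndall_scal; auto]|apply bndall_single]).
   assert (Pc : forall w, Cnorm w < 1 -> 0 < Re (ps c w)).
   { intros w Hw. assert (E : ps c w = Cadd (Cadd (ps A w) (Cmul e (ps B w))) (RtoC (- beta))).
     { apply ps_cv_unique. eapply Cseries_cv_ext; [|apply (Cseries_cv_add _ _ _ _ (Cseries_cv_add _ _ _ _ (ps_cv A w BA Hw) (Cseries_cv_scal e _ _ (ps_cv B w BB Hw))) (Cseries_cv_single _))].
       intros [|n]; unfold c, single.
       - set (u := A 0%nat). set (v := B 0%nat). simpl Cpow. Cring.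
       - set (u := A (S n)). set (v := B (S n)). set (P := Cpow w (S n)). Cring. }
     rewrite E. specialize (HAB w Hw). specialize (He2 (ps B w)). Cs. lra. }
   pose proof (SK c q Bc Bq q0 Pc Pq z Hz) as HS.
   assert (E : ps (hadamard c q) z = Cadd (Cadd (ps (hadamard A q) z) (Cmul e G)) (RtoC (- beta))).
   { apply ps_cv_unique. eapply Cseries_cv_ext; [|apply (Cseries_cv_add _ _ _ _ (Cseries_cv_add _ _ _ _ (ps_cv (hadamard A q) z (bndall_had A q BA Bq) Hz) (Cseries_cv_scal e _ _ (ps_cv (hadamard B q) z (bndall_had B q BB Bq) Hz))) (Cseries_cv_single _))].
     intros [|n]; unfold c, single, hadamard.
     - rewrite q0. set (u := A 0%nat). set (v := B 0%nat). simpl Cpow. Cring.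
     - set (u := A (S n)). set (v := B (S n)). set (P := Cpow z (S n)). set (qq := q (S n)). Cring. }
   rewrite E in HS. Cs. fold G. lra.
Qed.
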